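(* Let $k\ge1$ and $b\ge 1$ be integers and $0\le t<k$. Then $$\sigma_{k}^{(b)}(t;1)=\frac{1}{k}\sigma_{k}^{(b)}(t;k)=\frac{1}{k}c_{k}(t).$$
   Context: For a positive integer $m$, $(q)_m=(1-q)\cdots(1-q^m)$, $(q)_0=1$. For integers $b\ge 0$, $k\ge1$ and $1\le s\le k$, let $R^{(b)}_{k,s}(q)=\sum_{t=0}^{k-1}\sigma^{(b)}_k(t;s)q^t$ be the remainder of $\frac{1}{k^b}(q)_{k-1}^{\,b}(q)_{s-1}$ upon division by $1-q^k$. $c_k(t)=\sum_{1\le h\le k,\ \gcd(h,k)=1}e^{2\pi i ht/k}$ is the Ramanujan sum. *)

(* Defs.v *)
From mathcomp Require Import all_boot all_order all_algebra all_field.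
Set Implicit Arguments. Unset Strict Implicit. Unset Printing Implicit Defensive.
Import Order.TTheory GRing.Theory Num.Theory.
Local Open Scope ring_scope.

Definition qpoch (m : nat) : {poly algC} := \prod_(1 <= i < m.+1) (1 - 'X^i).

(* sigma^{(b)}_k(t;s): coefficient of q^t in the remainder of
   (1/k^b) (q)_{k-1}^b (q)_{s-1} upon division by 1 - q^k *)
Definition sigma (b k t s : nat) : algC :=
  ((((k ^ b)%:R)^-1 *: (qpoch k.-1 ^+ b * qpoch s.-1)) %% (1 - 'X^k))`_t.

(* e^{2 pi i / k}: k.-root(-1) is e^{i pi / k} (root with minimal nonnegative argument) *)
Definition zeta (k : nat) : algC := (k.-root (-1)) ^+ 2.

Definition ramanujan_sum (k t : nat) : algC :=
  \sum_(1 <= h < k.+1 | coprime h k) zeta k ^+ (h * t).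

(* Main.v *)
Require Import Defs.
From mathcomp Require Import all_boot all_order all_algebra all_field.
From mathcomp Require Import lra zify.
Import Order.TTheory GRing.Theory Num.Theory.
Local Open Scope ring_scope.

Lemma sqrt_le (R : realFieldType) (x y : R) : 0 <= x -> 0 <= y -> x^+2 <= y^+2 -> x <= y.
Proof. move=> hx hy h; rewrite -ler_sqr ?nnegrE //. Qed.
Lemma rot_real (R : realFieldType) (a b c s : R) : a^+2 + b^+2 = 1 -> c^+2 + s^+2 = 1 -> 0 <= b -> 0 <= s -> a <= c -> c != 1 -> 0 <= b*c - a*s /\ a < a*c + b*s.
Proof.
move=> h1 h2 hb hs hac hc1.
have hcle : c <= 1 by nra.
have hc : c < 1 by rewrite lt_neqAle hc1 /=.
split.
- have [ha|ha] := lerP 0 a.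
  + have hsb : s <= b by apply: sqrt_le => //; nra.
    nra.
  + have [hc0|hc0] := lerP 0 c; first by nra.
    have hsb : b <= s by apply: sqrt_le => //; nra.
    nra.
- have [ha|ha] := lerP a 0.
  + have [ha0|ha0] := ltrP a 0; first by nra.
    have a0 : a = 0 by apply/eqP; rewrite eq_le ha ha0.
    subst a.
    have hb1 : b = 1 by apply/eqP; rewrite eq_le; apply/andP; split; [apply: sqrt_le|apply: sqrt_le]; nra.
    have : 0 < s^+2 by nra.
    nra.
  + have hsb : s <= b by apply: sqrt_le => //; nra.
    nra.
Qed.
Lemma leRE (x y : algR) : (x <= y) = (algRval x <= algRval y). Proof. by []. Qed.
Lemma ltRE (x y : algR) : (x < y) = (algRval x < algRval y). Proof. by []. Qed.

Lemma algRval_inj : injective algRval. Proof. exact: val_inj. Qed.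

Lemma rotC (p q : algC) : `|p| = 1 -> `|q| = 1 -> 0 <= 'Im p -> 0 <= 'Im q ->
  'Re p <= 'Re q -> q != 1 -> 0 <= 'Im (p * q^*) /\ 'Re p < 'Re (p * q^*).
Proof.
move=> np nq ip iq rpq q1.
rewrite ImM ReM Re_conj Im_conj.
pose a := in_algR (Creal_Re p); pose b := in_algR (Creal_Im p).
pose c := in_algR (Creal_Re q); pose s := in_algR (Creal_Im q).
have h1 : a^+2 + b^+2 = 1.
  by apply: algRval_inj; rewrite rmorphD !rmorphXn rmorph1 /= -normC2_Re_Im np expr1n.
have h2 : c^+2 + s^+2 = 1.
  by apply: algRval_inj; rewrite rmorphD !rmorphXn rmorph1 /= -normC2_Re_Im nq expr1n.
have hc1 : c != 1.
  apply/negP => /eqP /(congr1 algRval) /= rq1.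
  move: nq => /eqP; rewrite -(eqrXn2 (n:=2)) // ?normr_ge0 // ?ler01 // normC2_Re_Im rq1 expr1n.
  rewrite -subr_eq0 addrAC subrr add0r sqrf_eq0 => /eqP iq0.
  by move: q1; rewrite [q]Crect rq1 iq0 mulr0 addr0 eqxx.
have [] := @rot_real algR a b c s h1 h2 ip iq rpq hc1.
rewrite leRE ltRE !rmorphB !rmorphD !rmorphM /= => H1 H2.
split; last by rewrite mulrN opprK.
by rewrite mulrN addrC [_ * 'Im p]mulrC.
Qed.

Lemma sameRe (p q : algC) : `|p| = 1 -> `|q| = 1 -> 0 <= 'Im p -> 0 <= 'Im q ->
  'Re p = 'Re q -> p = q.
Proof.
move=> np nq ip iq e.
have : 'Im p ^+ 2 = 'Im q ^+ 2.
  have h1 := normC2_Re_Im p; have h2 := normC2_Re_Im q.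
  rewrite np expr1n in h1; rewrite nq expr1n in h2.
  by apply: (addrI ('Re p ^+ 2)); rewrite -h1 e -h2.
move/eqP; rewrite eqrXn2 // => /eqP ei.
by rewrite [p]Crect [q]Crect e ei.
Qed.

Lemma count_strict (T : eqType) (a b : pred T) (s : seq T) (x : T) :
  (forall g, b g -> a g) -> x \in s -> a x -> ~~ b x -> (count b s < count a s)%N.
Proof.
move=> ba; elim: s => //= h t IH; rewrite inE => /orP [/eqP <- | xt] ax bx.
  rewrite ax (negbTE bx) /= add0n add1n ltnS.
  exact: sub_count.
have := IH xt ax bx.
have : (b h <= a h)%N by case: (b h) (ba h) => // ->.
move=> h1 h2; apply: (leq_ltn_trans (leq_add h1 (leqnn _))); by rewrite ltn_add2l.
Qed.

Lemma norm_unity (v : algC) m : (0 < m)%N -> v ^+ m = 1 -> `|v| = 1.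
Proof.
move=> m0 e; apply/eqP; rewrite -(pexpr_eq1 (n:=m)) // -normrX e normr1 //.
Qed.

Lemma conj_unit (v : algC) : `|v| = 1 -> v^* * v = 1.
Proof. by move=> nv; rewrite -normCKC nv expr1n. Qed.

Section Geo.
Variable n : nat.
Hypothesis n0 : (0 < n)%N.
Let y := n.-root (-1 : algC).

Let yn : y ^+ n = -1. Proof. exact: rootCK. Qed.
Let y2n : y ^+ (n.*2) = 1.
Proof. by rewrite -addnn exprD yn mulrNN mulr1. Qed.
Let n2 : (0 < n.*2)%N. Proof. by rewrite double_gt0. Qed.
Let ny : `|y| = 1. Proof. exact: norm_unity n2 y2n. Qed.
Let iy : 0 <= 'Im y.
Proof.
case: n n0 @y => // -[|m] _ /=; last exact: Im_rootC_ge0.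
by rewrite root1C; rewrite (Creal_ImP _ _) ?rpredN1.
Qed.
Let ymax v : v ^+ n = -1 -> 'Re v <= 'Re y.
Proof.
move=> vn; have [iv|iv] := boolP (0 <= 'Im v); first exact: rootC_Re_max.
rewrite -Re_conj; apply: rootC_Re_max => //.
  by rewrite -rmorphXn vn rmorphN1.
rewrite Im_conj oppr_ge0; move: iv.
by rewrite -real_ltNge ?Creal_Im ?rpred0 // => /ltW.
Qed.
Let y1 : y != 1.
Proof.
apply/eqP => e; move: yn; rewrite e expr1n => /eqP.
by rewrite -subr_eq0 opprK -(natrD _ 1 1) pnatr_eq0.
Qed.

Let step v : v ^+ n.*2 = 1 -> 0 <= 'Im v -> v = 1 \/ 'Re v <= 'Re y.
Proof.
move=> v2n iv; have [le|gt] := boolP ('Re v <= 'Re y); first by right.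
left; apply/eqP/negP => v1; have nv := norm_unity _ _ n2 v2n.
have lt : 'Re y < 'Re v by rewrite real_ltNge ?Creal_Re.
have [_] := rotC _ _ ny nv iy iv (ltW lt) (introN idP v1).
have : (v ^+ n) ^+ 2 == 1 by rewrite -exprM muln2 v2n.
rewrite sqrf_eq1 => /orP [/eqP vn1 | /eqP vn1].
  have : (y * v^*) ^+ n = -1 by rewrite exprMn yn -rmorphXn vn1 rmorph1 mulr1.
  by move/ymax => h /(le_lt_trans h); rewrite ltxx.
by move/ymax: vn1 => h; move: lt; rewrite real_ltNge ?Creal_Re // h.
Qed.

Variable z : algC.
Hypothesis zp : (n.*2).-primitive_root z.
Let G := [seq z ^+ i | i <- iota 0 n.*2].
Let inG v : v ^+ n.*2 = 1 -> v \in G.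
Proof.
move=> v2n; have [i ->] := prim_rootP zp v2n.
by apply: map_f; rewrite mem_iota add0n ltn_ord.
Qed.

Let descent (m : nat) : forall v, v ^+ n.*2 = 1 -> 0 <= 'Im v ->
  (count (fun g => ('Re v < 'Re g)%R) G <= m)%N -> exists i, v = y ^+ i.
Proof.
elim: m => [|m IH] v v2n iv cnt.
all: have [->|le] := step v v2n iv; first by exists 0%N.
all: have nv := norm_unity _ _ n2 v2n.
all: have [iv' lt] := rotC _ _ nv ny iv iy le y1.
all: have v'2n : (v * y^*) ^+ n.*2 = 1 by rewrite exprMn -rmorphXn y2n rmorph1 mulr1.
all: have cs : (count (fun g => ('Re (v * y^*) < 'Re g)%R) G < count (fun g => ('Re v < 'Re g)%R) G)%N
  by apply: (@count_strict _ _ _ G (v * y^*)) => //=; [move=> g; apply: lt_trans | exact: inG | rewrite ltxx].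
  by move: (leq_trans cs cnt).
have [i ei] := IH _ v'2n iv' (leq_trans (ltnSE (leq_trans cs cnt)) (leqnn _)).
exists i.+1; rewrite exprSr -ei -mulrA conj_unit ?mulr1 //.
Qed.

Lemma y_prim : (n.*2).-primitive_root y.
Proof.
have z2n := prim_expr_order zp.
have [i zi] : exists i, z = y ^+ i.
  have [iz|iz] := boolP (0 <= 'Im z).
    exact: (descent _ z z2n iz (leqnn _)).
  have zc2n : z^* ^+ n.*2 = 1 by rewrite -rmorphXn z2n rmorph1.
  have izc : 0 <= 'Im z^*.
    by rewrite Im_conj oppr_ge0; move: iz; rewrite -real_ltNge ?Creal_Im ?rpred0 // => /ltW.
  have [j ej] := descent _ _ zc2n izc (leqnn _).
  exists (j * (n.*2).-1)%N.
  have yc : y^* = y ^+ (n.*2).-1.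
    apply: (mulIf (x := y)); first by apply/eqP => y0; move: ny; rewrite y0 normr0 => /eqP; rewrite eq_sym oner_eq0.
    by rewrite conj_unit // -exprSr prednK.
  rewrite -[z]conjCK ej rmorphXn; transitivity ((y^*) ^+ j); first by [].
  by rewrite yc -exprM mulnC.
have [r rp rd] := prim_order_exists n2 y2n.
have : (n.*2 %| r)%N by rewrite (prim_order_dvd zp) zi -exprM mulnC exprM (prim_expr_order rp) expr1n.
move=> d; have er : r = n.*2 by apply/eqP; rewrite eqn_dvd rd d.
by rewrite -er.
Qed.

End Geo.

Lemma zeta_prim k : (0 < k)%N -> k.-primitive_root (zeta k).
Proof.
move=> k0; have k2 : (0 < k.*2)%N by rewrite double_gt0.
have [z zp] := C_prim_root_exists k2.
have dk : (k %| k.*2)%N by rewrite -muln2 dvdn_mulr.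
have := dvdn_prim_root (@y_prim k k0 z zp) dk.
by rewrite -muln2 mulKn.
Qed.

Section Alg.
Variable k : nat.
Hypothesis k0 : (0 < k)%N.
Let z := zeta k.
Let zp : k.-primitive_root z := zeta_prim k k0.

Lemma size_1subXn : size (1 - 'X^k : {poly algC}) = k.+1.
Proof. by rewrite -opprB size_opp size_Xn_sub_1. Qed.

Lemma rem_eq (P Q : {poly algC}) : (size Q <= k)%N ->
  (forall j, (j < k)%N -> P.[z ^+ j] = Q.[z ^+ j]) -> P %% (1 - 'X^k) = Q.
Proof.
move=> sQ PQ.
pose rs := [seq z ^+ j | j <- iota 0 k].
have hr : all (root (P - Q)) rs.
  apply/allP => x /mapP [j]; rewrite mem_iota add0n => /andP [_ jk] ->.
  by rewrite /root hornerD hornerN PQ // subrr.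
have ur : uniq_roots rs.
  rewrite uniq_rootsE map_inj_in_uniq ?iota_uniq // => i j.
  rewrite !mem_iota !add0n => /andP [_ ik] /andP [_ jk] /eqP.
  by rewrite (eq_prim_root_expr zp) !modn_small // => /eqP.
have [q hq] := uniq_roots_prod_XsubC hr ur.
have e : \prod_(x <- rs) ('X - x%:P) = 'X^k - 1.
  by rewrite big_map -(factor_Xn_sub_1 zp) /index_iota subn0.
rewrite e in hq.
have -> : P = (- q) * (1 - 'X^k) + Q.
  by rewrite mulNr -mulrN opprB -hq addrNK.
by rewrite modp_addl_mul_small // size_1subXn ltnS.
Qed.

Lemma prod_1sub (w : algC) : k.-primitive_root w ->
  \prod_(1 <= i < k) (1 - w ^+ i) = k%:R.
Proof.
move=> wp.
have hf := factor_Xn_sub_1 wp.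
rewrite big_ltn // expr0 subrX1 in hf.
have hX : ('X - 1 : {poly algC}) != 0 by rewrite -size_poly_eq0 size_XsubC.
have := mulfI hX hf => /(congr1 (horner^~ 1)).
rewrite horner_prod horner_sum.
have hs : \sum_(i < k) ('X^i : {poly algC}).[1] = k%:R.
  by under eq_bigr do rewrite hornerXn expr1n; rewrite sumr_const card_ord.
rewrite hs => <-; apply: eq_bigr => i _; by rewrite hornerXsubC.
Qed.

Lemma qpoch_val j : (j < k)%N ->
  (qpoch k.-1).[z ^+ j] = if coprime j k then k%:R else 0.
Proof.
move=> jk; rewrite /qpoch prednK // horner_prod.
under eq_bigr do rewrite hornerD hornerN hornerC hornerXn.
case: ifP => cop.
  have wp : k.-primitive_root (z ^+ j) by rewrite prim_root_exp_coprime.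
  by rewrite -(prod_1sub _ wp).
pose g := gcdn j k; pose i0 := (k %/ g)%N.
have g0 : (0 < g)%N by rewrite gcdn_gt0 k0 orbT.
have g1 : g != 1%N by move: cop; rewrite /coprime => /negbT.
have gk : (g %| k)%N by apply: dvdn_gcdr.
have gj : (g %| j)%N by apply: dvdn_gcdl.
have ek : (i0 * g)%N = k by rewrite divnK.
have i00 : (0 < i0)%N by move: k0; rewrite -ek muln_gt0 => /andP [].
have i0k : (i0 < k)%N.
  by rewrite -[X in (_ < X)%N]ek ltn_Pmulr // ltn_neqAle eq_sym g1.
have hz : (z ^+ j) ^+ i0 = 1.
  apply/eqP; rewrite -exprM -(prim_order_dvd zp) -{1}ek.
  by rewrite mulnC dvdn_mul.
rewrite (bigD1_seq i0) ?mem_index_iota ?i00 ?iota_uniq //= hz subrr mul0r //.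
Qed.

Lemma orth e : \sum_(t < k) (z ^+ e) ^+ t = if (k %| e)%N then k%:R else 0.
Proof.
case: ifP => d.
  have -> : z ^+ e = 1 by apply/eqP; rewrite -(prim_order_dvd zp).
  by under eq_bigr do rewrite expr1n; rewrite sumr_const card_ord.
have ne : z ^+ e - 1 != 0 by rewrite subr_eq0 -(prim_order_dvd zp) d.
apply: (mulfI ne); rewrite mulr0 -subrX1 -exprM mulnC exprM (prim_expr_order zp).
by rewrite expr1n subrr.
Qed.

Lemma coprime_subl j : (j <= k)%N -> coprime (k - j) k = coprime j k.
Proof.
move=> jk; rewrite /coprime.
have e1 : gcdn (k - j) k = gcdn (k - j) j.
  by rewrite -(gcdnDr (k - j) j) subnKC.
have e2 : gcdn j k = gcdn j (k - j).
  by rewrite -(gcdnDl j (k - j)) subnKC.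
by rewrite e1 e2 gcdnC.
Qed.

Lemma C_val j : (j < k)%N ->
  (\poly_(t < k) ((k%:R)^-1 * ramanujan_sum k t)).[z ^+ j] =
  if coprime j k then 1 else 0.
Proof.
move=> jk; rewrite horner_poly /ramanujan_sum.
under eq_bigr do rewrite -mulrA mulr_suml.
rewrite -mulr_sumr exchange_big /=.
have -> : \sum_(1 <= h < k.+1 | coprime h k) \sum_(i < k) z ^+ (h * i)%N * (z ^+ j) ^+ i
   = \sum_(1 <= h < k.+1 | coprime h k) (if (k %| h + j)%N then k%:R else 0).
  apply: eq_bigr => h _; rewrite -orth; apply: eq_bigr => i _.
  by rewrite exprM -exprMn -exprD.
rewrite big_mkcond (bigD1_seq (k - j)%N) /= ?mem_index_iota ?iota_uniq //; last by lia.
rewrite big1_seq ?addr0.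
  rewrite subnK ?dvdnn ?coprime_subl ?(ltnW jk) //.
  by case: ifP => _; rewrite ?mulr0 ?mulVf ?pnatr_eq0 -?lt0n.
move=> h /andP [hne]; rewrite mem_index_iota => hin.
case: ifP => // _; case: ifP => // /dvdnP [q hq].
move: hne; have -> : h = (k - j)%N; last by rewrite eqxx.
move: hq hin; case: q => [|[|q]] /=; lia.
Qed.

Let C := \poly_(t < k) ((k%:R)^-1 * ramanujan_sum k t).
Let sC : (size C <= k)%N. Proof. exact: size_poly. Qed.
Let kn0 : (k%:R : algC) != 0. Proof. by rewrite pnatr_eq0 -lt0n. Qed.

Lemma sig1 b t : (1 <= b)%N -> (t < k)%N ->
  sigma b k t 1 = (k%:R)^-1 * ramanujan_sum k t.
Proof.
move=> b1 tk; rewrite /sigma /=.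
have q0 : qpoch 0 = 1 by rewrite /qpoch big_geq.
rewrite q0 mulr1 (rem_eq _ C sC); first by rewrite coef_poly tk.
move=> j jk; rewrite C_val // hornerZ horner_exp qpoch_val //.
case: ifP => _; first by rewrite -natrX mulVf // natrX expf_neq0.
by rewrite expr0n; case: b b1 => // b _; rewrite mulr0.
Qed.

Lemma sigk b t : (1 <= b)%N -> (t < k)%N ->
  sigma b k t k = ramanujan_sum k t.
Proof.
move=> b1 tk; rewrite /sigma /=.
rewrite (rem_eq _ (k%:R *: C)).
- by rewrite coefZ coef_poly tk mulrA mulfV // mul1r.
- by rewrite (leq_trans (size_scale_leq _ _)).
move=> j jk; rewrite !hornerZ C_val // hornerM horner_exp qpoch_val //.
case: ifP => _; first by rewrite mulrA -natrX mulVf ?mul1r ?mulr1 // natrX expf_neq0.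
by rewrite expr0n; case: b b1 => // b _; rewrite !mulr0.
Qed.

End Alg.

Theorem corollary2p6 (k b t : nat) :
  (1 <= k)%N -> (1 <= b)%N -> (t < k)%N ->
  sigma b k t 1 = (k%:R)^-1 * sigma b k t k /\
  (k%:R)^-1 * sigma b k t k = (k%:R)^-1 * ramanujan_sum k t.
Proof.
move=> k1 b1 tk.
rewrite (@sig1 k k1 b t b1 tk) (@sigk k k1 b t b1 tk); split => //.
Qed.
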